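(* Assume $\kappa=\kappa^{<\kappa}$. Every point of $S_\kappa$ is a strong butterfly point: for every $x\in S_\kappa$ there are disjoint open sets $A,B\subseteq S_\kappa$ with $A\cup B=S_\kappa\setminus\{x\}$ and $\overline{A}\cap\overline{B}=\{x\}$.
   Context: A space is zero-dimensional if it has a base of clopen sets. For a zero-dimensional space $X$ and an open $U\subseteq X$, the ($X$-)type $\tau(U)$ is the least cardinal $\tau$ such that $U$ is a union of $\tau$ many clopen subsets of $X$. A zero-dimensional space is an $F_\kappa$-space if every open subset of type less than $\kappa$ is $C^*$-embedded (every bounded continuous real-valued function on it extends continuously to the whole space). A space is a $G_\kappa$-space if every non-empty intersection of fewer than $\kappa$ open sets has non-empty interior. A $\kappa$-Parovičenko space is a compact Hausdorff zero-dimensional $F_\kappa$- and $G_\kappa$-space without isolated points (no weight restriction is imposed). If $\kappa=\kappa^{<\kappa}$ there is, up to homeomorphism, a unique $\kappa$-Parovičenko space of weight $\kappa$; it is denoted $S_\kappa$ (under CH, $S_{\omega_1}\cong\omega^*=\beta\omega\setminus\omega$). A point $x$ of a Hausdorff space $X$ is a strong butterfly point if $X\setminus\{x\}$ can be partitioned into open sets $A,B$ (the wings) with $\overline{A}\cap\overline{B}=\{x\}$. *)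

(* Defs.v *)
From Stdlib Require Import Reals List.
Open Scope R_scope.

Definition card_le (A B : Type) : Prop :=
  exists f : A -> B, forall a1 a2, f a1 = f a2 -> a1 = a2.
Definition card_lt (A B : Type) : Prop := card_le A B /\ ~ card_le B A.

(* The cardinal kappa is represented by a type K of cardinality kappa.
   kappa is infinite, and kappa^{<kappa} = kappa, i.e. kappa^lambda <= kappa
   for every cardinal lambda < kappa. *)
Definition infinite_card (K : Type) : Prop := card_le nat K.
Definition kappa_lt_kappa_eq (K : Type) : Prop :=
  forall L : Type, card_lt L K -> card_le (L -> K) K.

Section Topology.
Context {X : Type} (T : (X -> Prop) -> Prop).

Definition is_topology : Prop :=
  T (fun _ => True) /\
  (forall U V, T U -> T V -> T (fun x => U x /\ V x)) /\
  (forall F : (X -> Prop) -> Prop, (forall U, F U -> T U) ->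
     T (fun x => exists U, F U /\ U x)).

Definition clopen (U : X -> Prop) : Prop := T U /\ T (fun x => ~ U x).

Definition is_base {I : Type} (b : I -> X -> Prop) : Prop :=
  (forall i, T (b i)) /\
  (forall U x, T U -> U x -> exists i, b i x /\ forall y, b i y -> U y).

Definition has_weight (K : Type) : Prop :=
  (exists b : K -> X -> Prop, is_base b) /\
  (forall (I : Type) (b : I -> X -> Prop), is_base b -> card_le K I).

Definition hausdorff : Prop :=
  forall x y, x <> y -> exists U V, T U /\ T V /\ U x /\ V y /\
     forall z, ~ (U z /\ V z).

Definition compact : Prop :=
  forall F : (X -> Prop) -> Prop, (forall U, F U -> T U) ->
    (forall x, exists U, F U /\ U x) ->
    exists l : list (X -> Prop), (forall U, In U l -> F U) /\
      (forall x, exists U, In U l /\ U x).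

Definition zero_dimensional : Prop :=
  forall U x, T U -> U x -> exists C, clopen C /\ C x /\ forall y, C y -> U y.

Definition no_isolated_points : Prop := forall x : X, ~ T (fun y => y = x).

Definition type_lt (K : Type) (U : X -> Prop) : Prop :=
  exists (I : Type) (c : I -> X -> Prop), card_lt I K /\ (forall i, clopen (c i)) /\
    forall x, U x <-> exists i, c i x.

(* continuity on a subspace U (relative topology), for f : X -> R;
   the values of f outside U are irrelevant *)
Definition continuous_on (U : X -> Prop) (f : X -> R) : Prop :=
  forall x, U x -> forall eps, eps > 0 ->
    exists V, T V /\ V x /\ forall y, U y -> V y -> Rabs (f y - f x) < eps.

Definition C_star_embedded (U : X -> Prop) : Prop :=
  forall f : X -> R, continuous_on U f ->
    (exists M, forall x, U x -> Rabs (f x) <= M) ->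
    exists g : X -> R, continuous_on (fun _ => True) g /\ forall x, U x -> g x = f x.

Definition F_kappa_space (K : Type) : Prop :=
  zero_dimensional /\ forall U, T U -> type_lt K U -> C_star_embedded U.

Definition G_kappa_space (K : Type) : Prop :=
  forall (I : Type) (O : I -> X -> Prop), card_lt I K -> (forall i, T (O i)) ->
    (exists x, forall i, O i x) ->
    exists V, T V /\ (exists x, V x) /\ forall x, V x -> forall i, O i x.

(* kappa-Parovicenko space (no weight restriction) *)
Definition kappa_Parovicenko (K : Type) : Prop :=
  compact /\ hausdorff /\ zero_dimensional /\ F_kappa_space K /\ G_kappa_space K /\
  no_isolated_points.

Definition closure (A : X -> Prop) (x : X) : Prop :=
  forall U, T U -> U x -> exists y, U y /\ A y.

Definition strong_butterfly_point (x : X) : Prop :=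
  exists A B : X -> Prop, T A /\ T B /\
    (forall y, ~ (A y /\ B y)) /\
    (forall y, (A y \/ B y) <-> y <> x) /\
    (forall y, (closure A y /\ closure B y) <-> y = x).

End Topology.

(* Main.v *)
Require Import Defs.
From mathcomp Require Import ssreflect ssrfun ssrbool eqtype boolp wochoice.
From Stdlib Require Import Reals List Lra Wellfounded.
From Stdlib Require Import Classical ClassicalEpsilon FunctionalExtensionality PropExtensionality ProofIrrelevance.
Open Scope R_scope.

Lemma T_ext {X : Type} (T : (X -> Prop) -> Prop) (U V : X -> Prop) :
  (forall y, U y <-> V y) -> T U -> T V.
Proof.
intros H TU.
assert (E : U = V) by (apply functional_extensionality; intro y; apply propositional_extensionality; apply H).
rewrite -E; exact TU.
Qed.

Lemma open_union {X : Type} (T : (X -> Prop) -> Prop) (htop : is_topology T)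
  (F : (X -> Prop) -> Prop) (S : X -> Prop) :
  (forall U, F U -> T U) -> (forall y, S y <-> exists U, F U /\ U y) -> T S.
Proof.
intros HF HS. destruct htop as [_ [_ hu]].
apply (T_ext T (fun x => exists U, F U /\ U x)); [intro y; split; intro H; apply HS; exact H|].
apply hu; exact HF.
Qed.

Lemma nbhd_open {X : Type} (T : (X -> Prop) -> Prop) (htop : is_topology T) (S : X -> Prop) :
  (forall y, S y -> exists V, T V /\ V y /\ forall w, V w -> S w) -> T S.
Proof.
intros H.
apply (open_union T htop (fun V => T V /\ forall w, V w -> S w)).
- intros U [h _]; exact h.
- intro y; split.
  + intro Sy. destruct (H y Sy) as [V [TV [Vy HV]]]. exists V; split; [split|]; assumption.
  + intros [U [[_ HU] Uy]]. apply HU; exact Uy.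
Qed.

Lemma open_and {X : Type} (T : (X -> Prop) -> Prop) (htop : is_topology T) U V :
  T U -> T V -> T (fun y => U y /\ V y).
Proof. destruct htop as [_ [h _]]. apply h. Qed.

Lemma open_or {X : Type} (T : (X -> Prop) -> Prop) (htop : is_topology T) U V :
  T U -> T V -> T (fun y => U y \/ V y).
Proof.
intros TU TV. apply nbhd_open; [exact htop|].
intros y [Uy|Vy].
- exists U; split; [exact TU|split; [exact Uy|intros w Uw; left; exact Uw]].
- exists V; split; [exact TV|split; [exact Vy|intros w Vw; right; exact Vw]].
Qed.

Lemma open_empty {X : Type} (T : (X -> Prop) -> Prop) (htop : is_topology T) :
  T (fun _ : X => False).
Proof. apply nbhd_open; [exact htop|]. intros y []. Qed.

Lemma open_full {X : Type} (T : (X -> Prop) -> Prop) (htop : is_topology T) :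
  T (fun _ : X => True).
Proof. destruct htop as [h _]; exact h. Qed.

Lemma clopen_ext {X : Type} (T : (X -> Prop) -> Prop) (U V : X -> Prop) :
  (forall y, U y <-> V y) -> clopen T U -> clopen T V.
Proof.
intros H [h1 h2]; split.
- exact (T_ext T U V H h1).
- apply (T_ext T (fun x => ~ U x)); [|exact h2]. intro y; rewrite (H y); tauto.
Qed.

Lemma clopen_not {X : Type} (T : (X -> Prop) -> Prop) (U : X -> Prop) :
  clopen T U -> clopen T (fun y => ~ U y).
Proof.
intros [h1 h2]; split; [exact h2|].
apply (T_ext T U); [|exact h1]. intro y; split; [tauto|apply NNPP].
Qed.

Lemma clopen_and {X : Type} (T : (X -> Prop) -> Prop) (htop : is_topology T) U V :
  clopen T U -> clopen T V -> clopen T (fun y => U y /\ V y).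
Proof.
intros [u1 u2] [v1 v2]; split; [apply open_and; assumption|].
apply (T_ext T (fun y => ~ U y \/ ~ V y)); [intro y; tauto|].
apply open_or; assumption.
Qed.

Lemma clopen_or {X : Type} (T : (X -> Prop) -> Prop) (htop : is_topology T) U V :
  clopen T U -> clopen T V -> clopen T (fun y => U y \/ V y).
Proof.
intros [u1 u2] [v1 v2]; split; [apply open_or; assumption|].
apply (T_ext T (fun y => ~ U y /\ ~ V y)); [intro y; tauto|].
apply open_and; assumption.
Qed.

Lemma clopen_empty {X : Type} (T : (X -> Prop) -> Prop) (htop : is_topology T) :
  clopen T (fun _ : X => False).
Proof.
split; [apply open_empty; exact htop|].
apply (T_ext T (fun _ => True)); [intro; tauto|apply open_full; exact htop].
Qed.

Lemma clopen_list {X : Type} (T : (X -> Prop) -> Prop) (htop : is_topology T)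
  (G : (X -> Prop) -> Prop) (l : list (X -> Prop)) :
  (forall U, G U -> clopen T U) -> clopen T (fun z => exists U, In U l /\ G U /\ U z).
Proof.
intro HG. induction l as [|U0 l IH].
- apply (clopen_ext T (fun _ => False)); [|apply clopen_empty; exact htop].
  intro y; split; [intros []|intros [U [[] _]]].
- destruct (classic (G U0)) as [g0|g0].
  + apply (clopen_ext T (fun z => U0 z \/ exists U, In U l /\ G U /\ U z)).
    * intro y; split.
      -- intros [h|[U [i [g u]]]]; [exists U0; split; [left; reflexivity|split; assumption]|].
         exists U; split; [right; exact i|split; assumption].
      -- intros [U [[e|i] [g u]]]; [left; rewrite e; exact u|right; exists U; tauto].
    * apply clopen_or; [exact htop|apply HG; exact g0|exact IH].
  + apply (clopen_ext T (fun z => exists U, In U l /\ G U /\ U z)); [|exact IH].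
    intro y; split.
    * intros [U [i [g u]]]. exists U; split; [right; exact i|tauto].
    * intros [U [[e|i] [g u]]]; [subst U; contradiction|exists U; tauto].
Qed.

Lemma cont_lt {X : Type} (T : (X -> Prop) -> Prop) (htop : is_topology T) (g : X -> R)
  (gc : continuous_on T (fun _ => True) g) (c : R) : T (fun z => g z < c).
Proof.
apply nbhd_open; [exact htop|].
intros z gz. destruct (gc z I (c - g z)) as [V [TV [Vz HV]]]; [lra|].
exists V; split; [exact TV|split; [exact Vz|]].
intros w Vw. pose proof (HV w I Vw) as h. apply Rabs_def2 in h. lra.
Qed.

Lemma cont_gt {X : Type} (T : (X -> Prop) -> Prop) (htop : is_topology T) (g : X -> R)
  (gc : continuous_on T (fun _ => True) g) (c : R) : T (fun z => c < g z).
Proof.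
apply nbhd_open; [exact htop|].
intros z gz. destruct (gc z I (g z - c)) as [V [TV [Vz HV]]]; [lra|].
exists V; split; [exact TV|split; [exact Vz|]].
intros w Vw. pose proof (HV w I Vw) as h. apply Rabs_def2 in h. lra.
Qed.
Lemma wo_K (K : Type) : exists le : K -> K -> Prop,
  (forall P : K -> Prop, (exists k, P k) -> exists z, P z /\ forall w, P w -> le z w) /\
  (forall a b, le a b -> le b a -> a = b) /\ (forall a b, le a b \/ le b a).
Proof.
have [R wR] := @well_ordering_principle (classicType K).
have key : forall P : K -> Prop, (exists k, P k) -> exists z, P z /\ forall w, P w -> R z w.
  move=> P [k Pk].
  have ne : nonempty (fun k : classicType K => `[< P k >]).
    by exists k; rewrite unfold_in; apply/asboolP.
  have [z [[zin lb] _]] := wR _ ne.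
  exists z; split; first by move: zin; rewrite unfold_in => /asboolP.
  by move=> w Pw; apply: lb; rewrite unfold_in; apply/asboolP.
exists (fun a b => R a b); split; first exact: key.
have tot : forall a b : K, R a b \/ R b a.
  move=> a b; have [z [Pz lb]] := key (fun w => w = a \/ w = b) (ex_intro _ a (or_introl erefl)).
  case: Pz => Ez; [left|right]; rewrite -Ez; apply: lb; by [right|left].
split; last exact: tot.
move=> a b Rab Rba.
pose A := (fun k : classicType K => `[< k = a \/ k = b >]).
have ne : nonempty A by exists a; rewrite unfold_in; apply/asboolP; left.
have [z' [_ uniq]] := wR A ne.
have ha := uniq a; have hb := uniq b.
have mina : minimum_of R A a.
  split; first by rewrite unfold_in; apply/asboolP; left.
  move=> w; rewrite unfold_in => /asboolP [->|->] //.
  by have [] := tot a a.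
have minb : minimum_of R A b.
  split; first by rewrite unfold_in; apply/asboolP; right.
  move=> w; rewrite unfold_in => /asboolP [->|->] //.
  by have [] := tot b b.
by rewrite -(ha mina) -(hb minb).
Qed.

Lemma good_order (K : Type) : exists lt : K -> K -> Prop,
  well_founded lt /\ (forall a b, lt a b \/ a = b \/ lt b a) /\
  (forall a, ~ card_le K {b | lt b a}).
Proof.
destruct (wo_K K) as [le [hmin [hanti htot]]].
set lt0 := fun a b => le a b /\ a <> b.
assert (wf0 : well_founded lt0).
{ intro a. apply NNPP; intro na.
  destruct (hmin (fun k => ~ Acc lt0 k) (ex_intro _ a na)) as [z [nz lbz]].
  apply nz; constructor. intros w [lwz nwz].
  apply NNPP; intro nw. apply nwz. apply hanti; [exact lwz|apply lbz; exact nw]. }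
assert (tri0 : forall a b, lt0 a b \/ a = b \/ lt0 b a).
{ intros a b. destruct (classic (a = b)) as [e|ne]; [right; left; exact e|].
  destruct (htot a b) as [h|h]; [left; split; assumption|right; right; split; [exact h|intro e; apply ne; symmetry; exact e]]. }
destruct (classic (exists a, card_le K {b | lt0 b a})) as [[a0 Sa0]|nS].
- destruct (hmin (fun a => card_le K {b | lt0 b a}) (ex_intro _ a0 Sa0)) as [a [[f finj] lba]].
  exists (fun x y => lt0 (proj1_sig (f x)) (proj1_sig (f y))).
  split; [|split].
  + apply (wf_inverse_image K K lt0 (fun x => proj1_sig (f x))). exact wf0.
  + intros u v. destruct (tri0 (proj1_sig (f u)) (proj1_sig (f v))) as [h|[h|h]].
    * left; exact h.
    * right; left. apply finj. apply eq_sig_hprop; [intros; apply proof_irrelevance|exact h].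
    * right; right; exact h.
  + intros k [g ginj].
    assert (hk : lt0 (proj1_sig (f k)) a) by exact (proj2_sig (f k)).
    assert (Sk : card_le K {b | lt0 b (proj1_sig (f k))}).
    { exists (fun y => exist (fun b => lt0 b (proj1_sig (f k))) (proj1_sig (f (proj1_sig (g y)))) (proj2_sig (g y))).
      intros y1 y2 e. apply ginj. apply eq_sig_hprop; [intros; apply proof_irrelevance|].
      apply finj. apply eq_sig_hprop; [intros; apply proof_irrelevance|].
      apply (f_equal (@proj1_sig _ _)) in e. exact e. }
    pose proof (lba _ Sk) as h. destruct hk as [h1 h2]. apply h2. apply hanti; assumption.
- exists lt0. split; [exact wf0|split; [exact tri0|]].
  intros a Sa. apply nS. exists a; exact Sa.
Qed.

Lemma sep_clopen (K X : Type) (T : (X -> Prop) -> Prop) (htop : is_topology T)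
  (hc : Defs.compact T) (hz : zero_dimensional T) (hF : F_kappa_space T K)
  (I : Type) (hI : card_lt I K) (P Q : I -> X -> Prop)
  (cP : forall i, clopen T (P i)) (cQ : forall i, clopen T (Q i))
  (disj : forall i j y, ~ (P i y /\ Q j y)) :
  exists E, clopen T E /\ (forall i y, P i y -> E y) /\ (forall i y, Q i y -> ~ E y).
Proof.
set W := fun y => exists i, P i y \/ Q i y.
assert (openP : T (fun y => exists i, P i y)).
{ apply nbhd_open; [exact htop|]. intros y [i Py]. exists (P i); split; [apply cP|split; [exact Py|]].
  intros w Pw; exists i; exact Pw. }
assert (openQ : T (fun y => exists i, Q i y)).
{ apply nbhd_open; [exact htop|]. intros y [i Py]. exists (Q i); split; [apply cQ|split; [exact Py|]].
  intros w Pw; exists i; exact Pw. }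
assert (TW : T W).
{ apply (T_ext T (fun y => (exists i, P i y) \/ (exists i, Q i y))).
  - intro y; unfold W; split; [intros [[i h]|[i h]]; exists i; tauto|intros [i [h|h]]; [left|right]; exists i; exact h].
  - apply open_or; assumption. }
assert (tW : type_lt T K W).
{ exists I, (fun i y => P i y \/ Q i y). split; [exact hI|split].
  - intro i; apply clopen_or; [exact htop|apply cP|apply cQ].
  - intro y; unfold W; tauto. }
destruct hF as [_ hF].
pose f := fun y => if excluded_middle_informative (exists i, P i y) then 1 else 0.
assert (f1 : forall y, (exists i, P i y) -> f y = 1).
{ intros y h; unfold f; destruct (excluded_middle_informative (exists i, P i y)); [reflexivity|contradiction]. }
assert (f0 : forall y, (exists i, Q i y) -> f y = 0).
{ intros y [j h]; unfold f; destruct (excluded_middle_informative (exists i, P i y)) as [[i h']|]; [|reflexivity].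
  exfalso; exact (disj i j y (conj h' h)). }
destruct (hF W TW tW f) as [g [gc gf]].
{ intros y Wy eps heps. destruct Wy as [i [Py|Qy]].
  - exists (fun y => exists i, P i y). split; [exact openP|split; [exists i; exact Py|]].
    intros z _ hz'. rewrite (f1 z hz') (f1 y (ex_intro _ i Py)). rewrite Rminus_diag Rabs_R0; exact heps.
  - exists (fun y => exists i, Q i y). split; [exact openQ|split; [exists i; exact Qy|]].
    intros z _ hz'. rewrite (f0 z hz') (f0 y (ex_intro _ i Qy)). rewrite Rminus_diag Rabs_R0; exact heps. }
{ exists 1. intros y _. unfold f. destruct (excluded_middle_informative (exists i, P i y)).
  - rewrite Rabs_R1; lra.
  - rewrite Rabs_R0; lra. }
set Fam := fun U => U = (fun z => g z < 1) \/ (clopen T U /\ forall z, U z -> / 2 < g z).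
destruct (hc Fam) as [l [hl hcov]].
{ intros U [e|[[h _] _]]; [rewrite e; apply cont_lt; assumption|exact h]. }
{ intro y. destruct (classic (g y < 1)) as [h|h].
  - exists (fun z => g z < 1); split; [left; reflexivity|exact h].
  - destruct (hz (fun z => / 2 < g z) y (cont_gt T htop g gc (/2))) as [C [cC [Cy HC]]]; [lra|].
    exists C; split; [right; split; assumption|exact Cy]. }
exists (fun z => exists U, In U l /\ (clopen T U /\ forall w, U w -> / 2 < g w) /\ U z).
split; [|split].
- apply clopen_list; [exact htop|]. intros U [h _]; exact h.
- intros i y Py. destruct (hcov y) as [U [inU Uy]]. exists U; split; [exact inU|split; [|exact Uy]].
  destruct (hl U inU) as [e|h]; [|exact h].
  exfalso. rewrite e in Uy. simpl in Uy.
  assert (Wy : W y) by (exists i; left; exact Py).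
  rewrite (gf y Wy) (f1 y (ex_intro _ i Py)) in Uy. lra.
- intros i y Qy [U [_ [[_ hU] Uy]]]. pose proof (hU y Uy) as h.
  assert (Wy : W y) by (exists i; right; exact Qy).
  rewrite (gf y Wy) (f0 y (ex_intro _ i Qy)) in h. lra.
Qed.

Definition data (X : Type) := ((X -> Prop) * (X -> Prop) * (X -> Prop))%type.
Definition dM {X : Type} (d : data X) := fst (fst d).
Definition dP {X : Type} (d : data X) := snd (fst d).
Definition dQ {X : Type} (d : data X) := snd d.

Definition Good {K X : Type} (T : (X -> Prop) -> Prop) (x : X) (N : K -> X -> Prop)
  (lt : K -> K -> Prop) (a : K) (h : forall b, lt b a -> data X) (d : data X) : Prop :=
  clopen T (dM d) /\ clopen T (dP d) /\ clopen T (dQ d) /\ dM d x /\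
  (forall y, dM d y -> N a y) /\ (forall y, dP d y \/ dQ d y <-> ~ dM d y) /\
  (forall y, ~ (dP d y /\ dQ d y)) /\
  (forall b (p : lt b a) y, ~ (dP d y /\ dQ (h b p) y)) /\
  (forall b (p : lt b a) y, ~ (dQ d y /\ dP (h b p) y)) /\
  (exists y, dP d y /\ N a y) /\ (exists y, dQ d y /\ N a y).

Lemma not_single {X : Type} (T : (X -> Prop) -> Prop) (hni : no_isolated_points T)
  (V : X -> Prop) (v : X) : T V -> V v -> exists y, V y /\ y <> v.
Proof.
intros TV Vv. apply NNPP; intro H. apply (hni v).
apply (T_ext T V); [|exact TV]. intro y; split.
- intro Vy. apply NNPP; intro ne. apply H. exists y; split; assumption.
- intro e; rewrite e; exact Vv.
Qed.

Lemma step_exists (K X : Type) (T : (X -> Prop) -> Prop) (htop : is_topology T)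
  (hc : Defs.compact T) (hH : hausdorff T) (hz : zero_dimensional T)
  (hF : F_kappa_space T K) (hG : G_kappa_space T K) (hni : no_isolated_points T)
  (x : X) (N : K -> X -> Prop) (lt : K -> K -> Prop) (a : K)
  (hsmall : ~ card_le K {b | lt b a}) (Na : clopen T (N a)) (Nax : N a x)
  (h : forall b, lt b a -> data X)
  (H1 : forall b p, clopen T (dM (h b p)) /\ clopen T (dP (h b p)) /\ clopen T (dQ (h b p)) /\
          dM (h b p) x /\ (forall y, dP (h b p) y \/ dQ (h b p) y <-> ~ dM (h b p) y))
  (H2 : forall b p c q y, ~ (dP (h b p) y /\ dQ (h c q) y)) :
  exists d, Good T x N lt a h d.
Proof.
assert (hI : card_lt {b | lt b a} K).
{ split; [|exact hsmall]. exists (@proj1_sig _ _). intros u v e.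
  apply eq_sig_hprop; [intros; apply proof_irrelevance|exact e]. }
destruct (sep_clopen K X T htop hc hz hF {b | lt b a} hI
   (fun i => dP (h (proj1_sig i) (proj2_sig i))) (fun i => dQ (h (proj1_sig i) (proj2_sig i))))
  as [E [cE [PE QE]]].
{ intro i; apply (H1 _ _). }
{ intro i; apply (H1 _ _). }
{ intros i j y; apply H2. }
assert (HV : exists V, T V /\ (exists v, V v) /\ (forall y, V y -> N a y) /\
          (forall b p y, V y -> dM (h b p) y)).
{ destruct (classic (inhabited {b | lt b a})) as [[i0]|nI].
  - destruct (hG {b | lt b a} (fun i y => dM (h (proj1_sig i) (proj2_sig i)) y /\ N a y) hI)
      as [V [TV [ne sub]]].
    + intro i. apply open_and; [exact htop|apply (H1 _ _)|apply Na].
    + exists x. intro i; split; [apply (H1 _ _)|exact Nax].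
    + exists V; split; [exact TV|split; [exact ne|split]].
      * intros y Vy. exact (proj2 (sub y Vy i0)).
      * intros b p y Vy. exact (proj1 (sub y Vy (exist _ b p))).
  - exists (N a); split; [apply Na|split; [exists x; exact Nax|split; [tauto|]]].
    intros b p. exfalso. apply nI. constructor. exact (exist _ b p). }
destruct HV as [V [TV [[v Vv] [VN VM]]]].
assert (Hy : exists y, V y /\ y <> x).
{ destruct (classic (v = x)) as [e|ne].
  - apply (not_single T hni V x TV). rewrite -e; exact Vv.
  - exists v; split; assumption. }
destruct Hy as [y [Vy yx]].
destruct (hH y x yx) as [U [W [TU [TW [Uy [Wx UW]]]]]].
destruct (hz (fun w => U w /\ V w) y (open_and T htop U V TU TV) (conj Uy Vy)) as [Rr [cR [Ry HR]]].
assert (nRx : ~ Rr x) by (intro Rx; apply (UW x); split; [exact (proj1 (HR x Rx))|exact Wx]).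
destruct (not_single T hni Rr y (proj1 cR) Ry) as [z [Rz zy]].
destruct (hH y z (fun e => zy (Logic.eq_sym e))) as [U' [W' [TU' [TW' [Uy' [Wz' UW']]]]]].
destruct (hz (fun w => U' w /\ Rr w) y (open_and T htop U' Rr TU' (proj1 cR)) (conj Uy' Ry)) as [R1 [cR1 [R1y HR1]]].
assert (nR1z : ~ R1 z) by (intro R1z; apply (UW' z); split; [exact (proj1 (HR1 z R1z))|exact Wz']).
set M := fun w => N a w /\ ~ Rr w.
assert (cM : clopen T M) by (apply clopen_and; [exact htop|exact Na|apply clopen_not; exact cR]).
exists (M, (fun w => (~ M w /\ ~ Rr w /\ E w) \/ R1 w), (fun w => (~ M w /\ ~ Rr w /\ ~ E w) \/ (Rr w /\ ~ R1 w))).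
unfold Good, dM, dP, dQ; simpl.
assert (R1R : forall w, R1 w -> Rr w) by (intros w hw; exact (proj2 (HR1 w hw))).
assert (RV : forall w, Rr w -> V w) by (intros w hw; exact (proj2 (HR w hw))).
split; [exact cM|].
split.
{ apply clopen_or; [exact htop| |exact cR1].
  apply clopen_and; [exact htop|apply clopen_not; exact cM|].
  apply clopen_and; [exact htop|apply clopen_not; exact cR|exact cE]. }
split.
{ apply clopen_or; [exact htop| |].
  - apply clopen_and; [exact htop|apply clopen_not; exact cM|].
    apply clopen_and; [exact htop|apply clopen_not; exact cR|apply clopen_not; exact cE].
  - apply clopen_and; [exact htop|exact cR|apply clopen_not; exact cR1]. }
split; [unfold M; split; [exact Nax|exact nRx]|].
split; [intros w [hw _]; exact hw|].
split.
{ intro w; split.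
  - intros [[[hM _]|hR1]|[[hM _]|[hR _]]]; try exact hM.
    + intros [_ hn]; exact (hn (R1R w hR1)).
    + intros [_ hn]; exact (hn hR).
  - intro nM. destruct (classic (Rr w)) as [hR|hR].
    + destruct (classic (R1 w)) as [h1|h1]; [left; right; exact h1|right; right; split; assumption].
    + destruct (classic (E w)) as [he|he]; [left; left|right; left]; tauto. }
split.
{ intros w [[[_ [hr he]]|h1] [[_ [hr2 hne]]|[hr3 hn1]]]; try tauto; exact (hr2 (R1R w h1)). }
split.
{ intros b p w [[[_ [_ he]]|h1] hq].
  - exact (QE (exist _ b p) w hq he).
  - pose proof (VM b p w (RV w (R1R w h1))) as hm.
    apply (proj2 (proj2 (proj2 (proj2 (H1 b p)))) w); [right; exact hq|exact hm]. }
split.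
{ intros b p w [[[_ [_ he]]|[hR _]] hp].
  - exact (he (PE (exist _ b p) w hp)).
  - pose proof (VM b p w (RV w hR)) as hm.
    apply (proj2 (proj2 (proj2 (proj2 (H1 b p)))) w); [left; exact hp|exact hm]. }
split.
{ exists y; split; [right; exact R1y|exact (VN y Vy)]. }
{ exists z; split; [right; split; [exact Rz|exact nR1z]|exact (VN z (RV z Rz))]. }
Qed.

Theorem lemma4p1 (K : Type) (hinf : infinite_card K) (hK : kappa_lt_kappa_eq K)
  (X : Type) (T : (X -> Prop) -> Prop) (htop : is_topology T)
  (hP : kappa_Parovicenko T K) (hw : has_weight T K) :
  forall x : X, strong_butterfly_point T x.
Proof.
intro x.
destruct hP as [hc [hH [hz [hF [hG hni]]]]].
destruct hw as [[b hb] _].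
assert (Nex : forall k, exists C, clopen T C /\ C x /\ (b k x -> forall y, C y -> b k y)).
{ intro k. destruct (classic (b k x)) as [bx|nbx].
  - destruct (hz (b k) x (proj1 hb k) bx) as [C [cC [Cx HC]]].
    exists C; split; [exact cC|split; [exact Cx|intros _; exact HC]].
  - exists (fun _ => True). split; [|split; [exact I|intro; contradiction]].
    split; [apply open_full; exact htop|apply (T_ext T (fun _ => False)); [intro; tauto|apply open_empty; exact htop]]. }
pose N := fun k => proj1_sig (constructive_indefinite_description _ (Nex k)).
assert (HN : forall k, clopen T (N k) /\ N k x /\ (b k x -> forall y, N k y -> b k y)).
{ intro k. exact (proj2_sig (constructive_indefinite_description _ (Nex k))). }
assert (Nbase : forall U, T U -> U x -> exists k, forall y, N k y -> U y).
{ intros U TU Ux. destruct (proj2 hb U x TU Ux) as [k [bkx hk]].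
  exists k. intros y Ny. apply hk. exact (proj2 (proj2 (HN k)) bkx y Ny). }
destruct (good_order K) as [lt [wf [tri small]]].
assert (inh : inhabited (data X)) by (constructor; exact ((fun _ => True), (fun _ => True), (fun _ => True))).
pose step := fun a (h : forall b, lt b a -> data X) => epsilon inh (Good T x N lt a h).
pose f := Fix wf (fun _ => data X) step.
assert (feq : forall a, f a = step a (fun c _ => f c)).
{ intro a. unfold f.
  refine (Fix_eq wf (fun _ => data X) step _ a).
  intros a' h1 h2 e.
  assert (e' : h1 = h2).
  { apply functional_extensionality_dep; intro c. apply functional_extensionality_dep; intro p. apply e. }
  rewrite e'. reflexivity. }
assert (good : forall a, Good T x N lt a (fun c _ => f c) (f a)).
{ intro a. induction a as [a IH] using (well_founded_ind wf).
  rewrite (feq a). unfold step. apply epsilon_spec.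
  apply (step_exists K X T htop hc hH hz hF hG hni x N lt a (small a) (proj1 (HN a)) (proj1 (proj2 (HN a)))).
  - intros c p. destruct (IH c p) as [g1 [g2 [g3 [g4 [_ [g6 _]]]]]]. tauto.
  - intros c p d q y [hp hq]. destruct (tri c d) as [h|[h|h]].
    + destruct (IH d q) as [_ [_ [_ [_ [_ [_ [_ [_ [g9 _]]]]]]]]]. exact (g9 c h y (conj hq hp)).
    + subst d. destruct (IH c p) as [_ [_ [_ [_ [_ [_ [g7 _]]]]]]]. exact (g7 y (conj hp hq)).
    + destruct (IH c p) as [_ [_ [_ [_ [_ [_ [_ [g8 _]]]]]]]]. exact (g8 d h y (conj hp hq)). }
assert (cross : forall c d y, ~ (dP (f c) y /\ dQ (f d) y)).
{ intros c d y [hp hq]. destruct (tri c d) as [h|[h|h]].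
  + destruct (good d) as [_ [_ [_ [_ [_ [_ [_ [_ [g9 _]]]]]]]]]. exact (g9 c h y (conj hq hp)).
  + subst d. destruct (good c) as [_ [_ [_ [_ [_ [_ [g7 _]]]]]]]. exact (g7 y (conj hp hq)).
  + destruct (good c) as [_ [_ [_ [_ [_ [_ [_ [g8 _]]]]]]]]. exact (g8 d h y (conj hp hq)). }
set A := fun y => exists k, dP (f k) y.
set B := fun y => exists k, dQ (f k) y.
assert (TA : T A).
{ apply nbhd_open; [exact htop|]. intros y [k hk]. exists (dP (f k)).
  split; [exact (proj1 (proj1 (proj2 (good k))))|split; [exact hk|intros w hw; exists k; exact hw]]. }
assert (TB : T B).
{ apply nbhd_open; [exact htop|]. intros y [k hk]. exists (dQ (f k)).
  split; [exact (proj1 (proj1 (proj2 (proj2 (good k)))))|split; [exact hk|intros w hw; exists k; exact hw]]. }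
assert (AB : forall y, A y \/ B y <-> y <> x).
{ intro y; split.
  - intros [[k hk]|[k hk]] e; subst y;
    destruct (good k) as [_ [_ [_ [g4 [_ [g6 _]]]]]];
    [exact (proj1 (g6 x) (or_introl hk) g4)|exact (proj1 (g6 x) (or_intror hk) g4)].
  - intro yx. destruct (hH x y (fun e => yx (Logic.eq_sym e))) as [U [W [TU [TW [Ux [Wy UW]]]]]].
    destruct (Nbase U TU Ux) as [k hk].
    destruct (good k) as [_ [_ [_ [_ [g5 [g6 _]]]]]].
    destruct (proj2 (g6 y)) as [h|h].
    + intro My. apply (UW y). split; [apply hk; apply g5; exact My|exact Wy].
    + left; exists k; exact h.
    + right; exists k; exact h. }
exists A, B. split; [exact TA|split; [exact TB|split; [|split; [exact AB|]]]].
- intros y [[c hc'] [d hd]]. exact (cross c d y (conj hc' hd)).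
- intro y; split.
  + intros [cA cB]. apply NNPP; intro yx. destruct (proj2 (AB y) yx) as [hA|hB].
    * destruct (cB A TA hA) as [w [[c hc'] [d hd]]]. exact (cross c d w (conj hc' hd)).
    * destruct (cA B TB hB) as [w [[d hd] [c hc']]]. exact (cross c d w (conj hc' hd)).
  + intro e; subst y. split.
    * intros U TU Ux. destruct (Nbase U TU Ux) as [k hk].
      destruct (good k) as [_ [_ [_ [_ [_ [_ [_ [_ [_ [[w [hw1 hw2]] _]]]]]]]]]].
      exists w; split; [apply hk; exact hw2|exists k; exact hw1].
    * intros U TU Ux. destruct (Nbase U TU Ux) as [k hk].
      destruct (good k) as [_ [_ [_ [_ [_ [_ [_ [_ [_ [_ [w [hw1 hw2]]]]]]]]]]]].
      exists w; split; [apply hk; exact hw2|exists k; exact hw1].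
Qed.
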